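(* Let $X$ be a Polish space, $f:X\to\mathbb R$ a Baire-1 function and $a<b$ reals. Let $F\subseteq X$ be closed, $x\in X$ and $\xi<\omega_1$ with $x\in F^{(\xi)}_{f,a,b}$. Then there exists a countable compact set $K\subseteq F$ such that $x\in K^{(\xi)}_{f,a,b}$.
   Context: For closed $F\subseteq X$: $F'_{f,a,b}=\overline{F\cap[f<a]}\cap\overline{F\cap[f>b]}$, where $[f<a]=\{x:f(x)<a\}$, $[f>b]=\{x:f(x)>b\}$; iterated derivatives $F^{(0)}_{f,a,b}=F$, $F^{(\xi+1)}_{f,a,b}=(F^{(\xi)}_{f,a,b})'_{f,a,b}$, $F^{(\lambda)}_{f,a,b}=\bigcap_{\xi<\lambda}F^{(\xi)}_{f,a,b}$ for limit $\lambda$. *)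

(* Defs.v *)
From Stdlib Require Import Reals List.
Set Implicit Arguments.
Open Scope R_scope.

Section Defs.
Variables (X : Type) (d : X -> X -> R).

Definition is_metric : Prop :=
  (forall x y, 0 <= d x y) /\ (forall x y, d x y = 0 <-> x = y) /\
  (forall x y, d x y = d y x) /\ (forall x y z, d x z <= d x y + d y z).

Definition countable (A : X -> Prop) : Prop :=
  exists g : X -> nat, forall x y, A x -> A y -> g x = g y -> x = y.

Definition cauchy (u : nat -> X) : Prop :=
  forall eps, 0 < eps -> exists N, forall n m, (N <= n)%nat -> (N <= m)%nat -> d (u n) (u m) < eps.

Definition converges_to (u : nat -> X) (l : X) : Prop :=
  forall eps, 0 < eps -> exists N, forall n, (N <= n)%nat -> d (u n) l < eps.

Definition polish : Prop :=
  is_metric /\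
  (forall u, cauchy u -> exists l, converges_to u l) /\
  (exists D : X -> Prop, countable D /\
     forall x eps, 0 < eps -> exists y, D y /\ d x y < eps).

Definition closure (A : X -> Prop) (x : X) : Prop :=
  forall eps, 0 < eps -> exists y, A y /\ d x y < eps.

Definition closed (A : X -> Prop) : Prop := forall x, closure A x -> A x.

Definition open (U : X -> Prop) : Prop :=
  forall x, U x -> exists eps, 0 < eps /\ forall y, d x y < eps -> U y.

Definition mcompact (K : X -> Prop) : Prop :=
  forall (J : Type) (U : J -> X -> Prop), (forall j, open (U j)) ->
    (forall x, K x -> exists j, U j x) ->
    exists l : list J, forall x, K x -> exists j, In j l /\ U j x.

Definition continuous (g : X -> R) : Prop :=
  forall x eps, 0 < eps -> exists delta, 0 < delta /\
    forall y, d x y < delta -> Rabs (g y - g x) < eps.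

Definition baire1 (f : X -> R) : Prop :=
  exists fn : nat -> X -> R, (forall n, continuous (fn n)) /\
    forall x, Un_cv (fun n => fn n x) (f x).

Definition deriv (f : X -> R) (a b : R) (F : X -> Prop) : X -> Prop :=
  fun x => closure (fun y => F y /\ f y < a) x /\ closure (fun y => F y /\ f y > b) x.

(** Ordinals below omega_1 are represented as elements xi of a countable
    strict well-order (I, lt); xi stands for the order type of {j | lt j xi}. *)
Definition ctble_wellorder (I : Type) (lt : I -> I -> Prop) : Prop :=
  well_founded lt /\
  (forall i j k, lt i j -> lt j k -> lt i k) /\
  (forall i j, i = j \/ lt i j \/ lt j i) /\
  (exists g : I -> nat, forall i j, g i = g j -> i = j).

(** iterated derivative by well-founded recursion along lt:
    minimum -> F ; successor of k -> (F^(k))' ; limit -> intersection. *)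
Definition iter_deriv (f : X -> R) (a b : R) (F : X -> Prop)
  (I : Type) (lt : I -> I -> Prop) (wf : well_founded lt) : I -> X -> Prop :=
  Fix wf (fun _ => X -> Prop)
    (fun j rec x =>
       ((forall k, ~ lt k j) /\ F x)
       \/ (exists k (hk : lt k j), (forall m, lt m j -> m = k \/ lt m k) /\
             deriv f a b (rec k hk) x)
       \/ ((exists k, lt k j) /\ (forall k, lt k j -> exists m, lt k m /\ lt m j) /\
             forall k (hk : lt k j), rec k hk x)).

End Defs.
Arguments polish {X}. Arguments closed {X}. Arguments countable {X}.
Arguments mcompact {X}. Arguments baire1 {X}. Arguments iter_deriv {X} d f a b F {I} lt wf.
Arguments ctble_wellorder {I}.

(* Main.v *)
Require Import Defs.
From Stdlib Require Import Reals List Lra Lia Classical ClassicalEpsilon FunctionalExtensionality PropExtensionality Cantor.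
Open Scope R_scope.

Lemma small_rad r e : 0 < r -> 0 < e -> exists N, forall n, (N <= n)%nat -> r / (INR n + 1) < e.
Proof.
  intros Hr He. destruct (archimed_cor1 (e / r)) as [N [H1 H2]].
  { apply Rdiv_lt_0_compat; auto. }
  exists N. intros n Hn. apply le_INR in Hn. apply lt_INR in H2. simpl in H2.
  assert (INR N * (e / r) > 1).
  { apply Rmult_lt_reg_l with (/ INR N). apply Rinv_0_lt_compat; lra.
    rewrite <- Rmult_assoc, Rinv_l by lra. lra. }
  apply Rmult_lt_reg_r with (INR n + 1). lra.
  unfold Rdiv. rewrite Rmult_assoc, Rinv_l by lra.
  assert (e * (INR n + 1) >= e * INR N) by nra.
  assert (e * INR N > r).
  { replace (INR N * (e / r)) with ((e * INR N) / r) in H by (field; lra).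
    apply Rmult_lt_reg_r with (/ r). apply Rinv_0_lt_compat; lra.
    rewrite Rinv_r by lra. unfold Rdiv in H. lra. }
  lra.
Qed.

Lemma rad_pos r n : 0 < r -> 0 < r / (INR n + 1).
Proof. intros. apply Rdiv_lt_0_compat; auto. pose proof (pos_INR n); lra. Qed.

Lemma rad_le r n : 0 < r -> r / (INR n + 1) <= r.
Proof.
  intros. pose proof (pos_INR n). unfold Rdiv.
  rewrite <- (Rmult_1_r r) at 2. apply Rmult_le_compat_l; [lra|].
  rewrite <- Rinv_1. apply Rinv_le_contravar; lra.
Qed.

Lemma rad_mono r n m : 0 < r -> (n <= m)%nat -> r / (INR m + 1) <= r / (INR n + 1).
Proof.
  intros Hr H. apply le_INR in H. pose proof (pos_INR n). unfold Rdiv.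
  apply Rmult_le_compat_l; [lra|]. apply Rinv_le_contravar; lra.
Qed.

Section Comb.
Variables (X : Type) (d : X -> X -> R) (Hm : is_metric d).

Lemma fin_cover (M : nat -> X -> Prop) (J : Type) (U : J -> X -> Prop) :
  (forall n, mcompact d (M n)) -> (forall j, open d (U j)) ->
  (forall n y, M n y -> exists j, U j y) ->
  forall N, exists l, forall n y, (n < N)%nat -> M n y -> exists j, In j l /\ U j y.
Proof.
  intros HM HU Hc N. induction N as [|N [l Hl]].
  - exists nil. intros; lia.
  - destruct (HM N J U HU (Hc N)) as [l' Hl'].
    exists (l ++ l'). intros n y Hn Hy.
    destruct (Nat.eq_dec n N) as [->|Hne].
    + destruct (Hl' y Hy) as [j [Hj1 Hj2]]. exists j; split; auto. apply in_or_app; auto.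
    + destruct (Hl n y ltac:(lia) Hy) as [j [Hj1 Hj2]]. exists j; split; auto. apply in_or_app; auto.
Qed.

Lemma combine (F : X -> Prop) x r (M : nat -> X -> Prop) :
  F x -> 0 < r ->
  (forall n, (forall y, M n y -> F y /\ d x y < r / (INR n + 1)) /\ countable (M n) /\ mcompact d (M n)) ->
  (forall y, (y = x \/ exists n, M n y) -> F y /\ d x y < r) /\
  countable (fun y => y = x \/ exists n, M n y) /\ mcompact d (fun y => y = x \/ exists n, M n y).
Proof.
  intros Fx Hr HM. destruct Hm as [Hd0 [Hdeq [Hsym Htri]]].
  split; [|split].
  - intros y [->|[n Hn]].
    + split; auto. rewrite (proj2 (Hdeq x x) eq_refl). auto.
    + destruct (proj1 (HM n) y Hn) as [H1 H2]. split; auto.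
      pose proof (rad_le r n Hr). lra.
  - assert (HG : forall n, exists g : X -> nat, forall y z, M n y -> M n z -> g y = g z -> y = z)
      by (intro n; exact (proj1 (proj2 (HM n)))).
    destruct (choice _ HG) as [G HGs].
    pose (nn := fun y => epsilon (inhabits 0%nat) (fun n => M n y)).
    exists (fun y => match excluded_middle_informative (y = x) with
             | left _ => 0%nat | right _ => S (Cantor.to_nat (nn y, G (nn y) y)) end).
    intros y z Hy Hz.
    destruct (excluded_middle_informative (y = x)) as [Ey|Ey];
    destruct (excluded_middle_informative (z = x)) as [Ez|Ez]; try congruence.
    intro E. apply Nat.succ_inj in E.
    apply (f_equal Cantor.of_nat) in E. rewrite !Cantor.cancel_of_to in E. injection E as E1 E2.
    destruct Hy as [|Hy]; [congruence|]. destruct Hz as [|Hz]; [congruence|].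
    pose proof (epsilon_spec (inhabits 0%nat) (fun n => M n y) Hy) as Sy.
    pose proof (epsilon_spec (inhabits 0%nat) (fun n => M n z) Hz) as Sz.
    fold (nn y) in Sy. fold (nn z) in Sz. rewrite E1 in Sy, E2.
    exact (HGs (nn z) y z Sy Sz E2).
  - intros J U HU Hc.
    destruct (Hc x (or_introl eq_refl)) as [j0 Hj0].
    destruct (HU j0 x Hj0) as [e [He Hball]].
    destruct (small_rad r e Hr He) as [N HN].
    destruct (fin_cover M J U (fun n => proj2 (proj2 (HM n))) HU
                (fun n y Hy => Hc y (or_intror (ex_intro _ n Hy))) N) as [l Hl].
    exists (j0 :: l). intros y [->|[n Hn]].
    + exists j0; split; simpl; auto.
    + destruct (Nat.lt_ge_cases n N) as [Hlt|Hge].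
      * destruct (Hl n y Hlt Hn) as [j [Hj1 Hj2]]. exists j; split; simpl; auto.
      * exists j0; split; simpl; auto. apply Hball.
        pose proof (proj2 (proj1 (HM n) y Hn)). pose proof (HN n Hge). lra.
Qed.
End Comb.
Section S.
Variables (X : Type) (d : X -> X -> R) (f : X -> R) (a b : R)
  (I : Type) (lt : I -> I -> Prop) (Hwf : well_founded lt).

Lemma iter_unfold (F : X -> Prop) j x :
  iter_deriv d f a b F lt Hwf j x <->
  (((forall k, ~ lt k j) /\ F x)
   \/ (exists k, lt k j /\ (forall m, lt m j -> m = k \/ lt m k) /\
          deriv d f a b (iter_deriv d f a b F lt Hwf k) x)
   \/ ((exists k, lt k j) /\ (forall k, lt k j -> exists m, lt k m /\ lt m j) /\
          forall k, lt k j -> iter_deriv d f a b F lt Hwf k x)).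
Proof.
  unfold iter_deriv at 1. rewrite Fix_eq.
  - split.
    + intros [H|[[k [hk [H1 H2]]]|H]]; [left; exact H| right; left; eauto | right; right].
      destruct H as [H1 [H2 H3]]. repeat split; auto.
    + intros [H|[[k [hk [H1 H2]]]|H]]; [left; exact H| right; left; eauto | right; right].
      destruct H as [H1 [H2 H3]]. repeat split; auto.
  - intros j0 g h Hgh.
    assert (E : g = h).
    { apply functional_extensionality_dep; intro y.
      apply functional_extensionality_dep; intro p. apply Hgh. }
    subst; reflexivity.
Qed.

Lemma closure_mono (A B : X -> Prop) : (forall y, A y -> B y) ->
  forall x, closure d A x -> closure d B x.
Proof. intros H x Hc e He. destruct (Hc e He) as [y [Hy1 Hy2]]. eauto. Qed.

Lemma iter_mono (K L : X -> Prop) : (forall y, K y -> L y) ->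
  forall j x, iter_deriv d f a b K lt Hwf j x -> iter_deriv d f a b L lt Hwf j x.
Proof.
  intros HKL j. induction j as [j IH] using (well_founded_ind Hwf).
  intros x Hx. apply iter_unfold in Hx. apply iter_unfold.
  destruct Hx as [[H1 H2]|[[k [hk [H1 [H2 H3]]]]|[H1 [H2 H3]]]].
  - left; auto.
  - right; left. exists k; repeat split; auto.
    + eapply closure_mono; [|exact H2]; intros y [Hy1 Hy2]; eauto.
    + eapply closure_mono; [|exact H3]; intros y [Hy1 Hy2]; eauto.
  - right; right; repeat split; auto.
Qed.

Lemma iter_sub (F : X -> Prop) : closed d F ->
  forall j x, iter_deriv d f a b F lt Hwf j x -> F x.
Proof.
  intros HF j. induction j as [j IH] using (well_founded_ind Hwf).
  intros x Hx. apply iter_unfold in Hx.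
  destruct Hx as [[H1 H2]|[[k [hk [H1 [H2 H3]]]]|[[k hk] [H2 H3]]]].
  - auto.
  - apply HF. intros e He. destruct (H2 e He) as [y [[Hy1 _] Hy2]]. eauto.
  - eauto.
Qed.
End S.

Section Main.
Variables (X : Type) (d : X -> X -> R) (Hm : is_metric d) (f : X -> R) (a b : R)
  (I : Type) (lt : I -> I -> Prop) (Hwf : well_founded lt)
  (g : I -> nat) (Hg : forall i j, g i = g j -> i = j)
  (F : X -> Prop) (HF : closed d F).

Lemma main_gen : forall j x, iter_deriv d f a b F lt Hwf j x -> forall r, 0 < r ->
  exists K, (forall y, K y -> F y /\ d x y < r) /\ countable K /\ mcompact d K /\
    iter_deriv d f a b K lt Hwf j x.
Proof.
  intro j. induction j as [j IH] using (well_founded_ind Hwf).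
  intros x Hx r Hr.
  pose proof (iter_sub X d f a b I lt Hwf F HF j x Hx) as Fx.
  pose proof Hm as [Hd0 [Hdeq [Hsym Htri]]].
  apply iter_unfold in Hx.
  destruct Hx as [[H1 H2]|[[k [hk [H1 [H2 H3]]]]|[H1 [H2 H3]]]].
  - destruct (combine X d Hm F x r (fun _ _ => False) Fx Hr) as [C1 [C2 C3]].
    { intro n. split; [intros y []|split].
      - exists (fun _ => 0%nat). intros y z [].
      - intros J U _ _. exists nil. intros y []. }
    eexists; split; [exact C1|split; [exact C2|split; [exact C3|]]].
    apply iter_unfold. left; split; auto.
  - assert (Hn : forall n:nat, exists M : X -> Prop,
      ((forall y, M y -> F y /\ d x y < r/(INR n+1)) /\ countable M /\ mcompact d M) /\
      exists y, d x y < r/(INR n+1) /\ (Nat.even n = true -> f y < a) /\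
        (Nat.even n = false -> f y > b) /\ iter_deriv d f a b M lt Hwf k y).
    { intro n. pose proof (rad_pos r n Hr) as Hp.
      set (e := r/(INR n+1)/2).
      assert (He : 0 < e) by (unfold e; lra).
      destruct (Nat.even n) eqn:Ev.
      - destruct (H2 e He) as [y [[Hy1 Hy2] Hy3]].
        destruct (IH k hk y Hy1 e He) as [M [HM1 [HM2 [HM3 HM4]]]].
        exists M. split; [split; [|split; auto]|].
        + intros z Hz. destruct (HM1 z Hz). split; auto.
          pose proof (Htri x y z). unfold e in *; lra.
        + exists y. repeat split; auto; try (unfold e in *; lra); try discriminate.
      - destruct (H3 e He) as [y [[Hy1 Hy2] Hy3]].
        destruct (IH k hk y Hy1 e He) as [M [HM1 [HM2 [HM3 HM4]]]].
        exists M. split; [split; [|split; auto]|].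
        + intros z Hz. destruct (HM1 z Hz). split; auto.
          pose proof (Htri x y z). unfold e in *; lra.
        + exists y. repeat split; auto; try (unfold e in *; lra); try discriminate. }
    destruct (choice _ Hn) as [Ms HMs].
    destruct (combine X d Hm F x r Ms Fx Hr) as [C1 [C2 C3]].
    { intro n. exact (proj1 (HMs n)). }
    eexists; split; [exact C1|split; [exact C2|split; [exact C3|]]].
    apply iter_unfold. right; left. exists k. split; auto. split; auto.
    assert (Sub : forall n y, iter_deriv d f a b (Ms n) lt Hwf k y ->
       iter_deriv d f a b (fun y => y = x \/ exists n, Ms n y) lt Hwf k y).
    { intros n. apply iter_mono. intros z Hz. right. exists n. exact Hz. }
    split.
    + intros e He. destruct (small_rad r e Hr He) as [N HN].
      destruct (proj2 (HMs (2*N)%nat)) as [y [Hy1 [Hy2 [_ Hy4]]]].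
      exists y. split; [split|].
      * eapply Sub; exact Hy4.
      * apply Hy2. apply Nat.even_even.
      * pose proof (HN (2*N)%nat ltac:(lia)). lra.
    + intros e He. destruct (small_rad r e Hr He) as [N HN].
      destruct (proj2 (HMs (2*N+1)%nat)) as [y [Hy1 [_ [Hy3 Hy4]]]].
      exists y. split; [split|].
      * eapply Sub; exact Hy4.
      * apply Hy3. apply Nat.even_odd.
      * pose proof (HN (2*N+1)%nat ltac:(lia)). lra.
  - assert (Hn : forall n:nat, exists M : X -> Prop,
      ((forall y, M y -> F y /\ d x y < r/(INR n+1)) /\ countable M /\ mcompact d M) /\
      forall k, lt k j -> g k = n -> iter_deriv d f a b M lt Hwf k x).
    { intro n. pose proof (rad_pos r n Hr) as Hp.
      destruct (classic (exists k, lt k j /\ g k = n)) as [[k [hk Hgk]]|Hno].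
      - destruct (IH k hk x (H3 k hk) _ Hp) as [M [HM1 [HM2 [HM3 HM4]]]].
        exists M. split; [split; auto|].
        intros k' hk' Hgk'. assert (k' = k) by (apply Hg; congruence). subst; auto.
      - exists (fun _ => False). split; [split; [intros y []|split]|].
        + exists (fun _ => 0%nat). intros y z [].
        + intros J U _ _. exists nil. intros y [].
        + intros k hk Hgk. exfalso. apply Hno; eauto. }
    destruct (choice _ Hn) as [Ms HMs].
    destruct (combine X d Hm F x r Ms Fx Hr) as [C1 [C2 C3]].
    { intro n. exact (proj1 (HMs n)). }
    eexists; split; [exact C1|split; [exact C2|split; [exact C3|]]].
    apply iter_unfold. right; right. split; auto. split; auto.
    intros k hk. eapply (iter_mono X d f a b I lt Hwf (Ms (g k))).
    + intros z Hz. right. exists (g k). exact Hz.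
    + apply (proj2 (HMs (g k))); auto.
Qed.
End Main.

Theorem lemma4p3 (X : Type) (d : X -> X -> R) (HX : polish d)
  (f : X -> R) (Hf : baire1 d f) (a b : R) (Hab : a < b)
  (F : X -> Prop) (HF : closed d F) (x : X)
  (I : Type) (lt : I -> I -> Prop) (Hwf : well_founded lt)
  (Hwo : ctble_wellorder lt) (xi : I)
  (Hx : iter_deriv d f a b F lt Hwf xi x) :
  exists K : X -> Prop, (forall y, K y -> F y) /\ countable K /\ mcompact d K /\
    iter_deriv d f a b K lt Hwf xi x.
Proof.
  destruct Hwo as [_ [_ [_ [g Hg]]]].
  destruct (main_gen X d (proj1 HX) f a b I lt Hwf g Hg F HF xi x Hx 1 Rlt_0_1)
    as [K [H1 [H2 [H3 H4]]]].
  exists K. split; [intros y Hy; exact (proj1 (H1 y Hy))|auto].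
Qed.
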